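(* For $n\ge1$, $\left|\Pi_n\wr C_2(1^11^2,1^12^2,1^22^1)\right|=2B(n)+n-1$, where $B(n)$ is the $n$th Bell number.
   Context: For $n\ge0$ let $[n]=\{1,\dots,n\}$. A $2$-colored set partition of $[n]$ is a set partition of $[n]$ together with an assignment of a color from $\{1,2\}$ to each element; $\Pi_n\wr C_2$ is the set of these. For a set $S$ of patterns, $\Pi_n\wr C_2(S)$ is the set of such colored partitions avoiding every pattern in $S$ in the pattern sense. For the patterns used here: $\sigma$ contains $1^11^2$ iff there are $i<j$ in the same block with $i$ colored $1$ and $j$ colored $2$; $1^12^2$ iff there are $i<j$ in different blocks with $i$ colored $1$ and $j$ colored $2$; $1^22^1$ iff there are $i<j$ in different blocks with $i$ colored $2$ and $j$ colored $1$. $B(n)$ is the number of set partitions of $[n]$. *)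

(* Defs.v *)
From mathcomp Require Import all_boot.
Set Implicit Arguments. Unset Strict Implicit. Unset Printing Implicit Defensive.

(* The ground set [n] = {1,...,n} is modelled by 'I_n = {0,...,n-1}
   (order-preserving shift by one). *)

Definition col1 : 'I_2 := @Ordinal 2 0 isT.
Definition col2 : 'I_2 := @Ordinal 2 1 isT.

Definition is_set_partition (n : nat) (P : {set {set 'I_n}}) : bool :=
  partition P [set: 'I_n].

Definition Bell (n : nat) : nat :=
  #|[set P : {set {set 'I_n}} | is_set_partition P]|.

Definition same_block (n : nat) (P : {set {set 'I_n}}) (i j : 'I_n) : bool :=
  [exists B in P, (i \in B) && (j \in B)].

Definition contains_11_12 n (P : {set {set 'I_n}}) (c : {ffun 'I_n -> 'I_2}) :=
  [exists i : 'I_n, exists j : 'I_n,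
     [&& i < j, same_block P i j, c i == col1 & c j == col2]].

Definition contains_11_22 n (P : {set {set 'I_n}}) (c : {ffun 'I_n -> 'I_2}) :=
  [exists i : 'I_n, exists j : 'I_n,
     [&& i < j, ~~ same_block P i j, c i == col1 & c j == col2]].

Definition contains_12_21 n (P : {set {set 'I_n}}) (c : {ffun 'I_n -> 'I_2}) :=
  [exists i : 'I_n, exists j : 'I_n,
     [&& i < j, ~~ same_block P i j, c i == col2 & c j == col1]].

Definition avoiders (n : nat) :
  {set {set {set 'I_n}} * {ffun 'I_n -> 'I_2}} :=
  [set x | [&& is_set_partition x.1,
              ~~ contains_11_12 x.1 x.2,
              ~~ contains_11_22 x.1 x.2 &
              ~~ contains_12_21 x.1 x.2]].

(* Main.v *)
Require Import Defs.
From mathcomp Require Import all_boot zify.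
Set Implicit Arguments. Unset Strict Implicit.

Definition fk n (k : nat) : {ffun 'I_n -> 'I_2} :=
  [ffun i : 'I_n => if i < k then col2 else col1].

Definition S2 n (c : {ffun 'I_n -> 'I_2}) := [set i | c i == col2].

Lemma col_cases (a : 'I_2) : (a == col1) || (a == col2).
Proof. by case: a => [[|[|]]]. Qed.

Lemma col12 : (col1 == col2) = false. Proof. by []. Qed.

Lemma card_lt n k : k <= n -> #|[set i : 'I_n | i < k]| = k.
Proof.
move=> kn.
have -> : [set i : 'I_n | i < k] = [set widen_ord kn j | j in 'I_k].
  apply/setP=> i; rewrite inE; apply/idP/imsetP.
    by move=> ik; exists (Ordinal ik) => //; apply/val_inj.
  by case=> j _ ->; rewrite /= ltn_ord.
rewrite card_imset ?card_ord //.
by move=> a b /(congr1 val) /= ab; apply/val_inj.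
Qed.

Lemma card_S2_fk n k : k <= n -> #|S2 (fk n k)| = k.
Proof.
move=> kn; rewrite -{2}(card_lt kn); apply: eq_card => i.
by rewrite !inE ffunE; case: (i < k).
Qed.

Lemma same_block_pblock n (P : {set {set 'I_n}}) i j :
  trivIset P -> same_block P i j -> j \in pblock P i.
Proof.
move=> tP /existsP [B /andP [BP /andP [iB jB]]].
by rewrite (def_pblock tP BP iB).
Qed.

Definition avoids n (P : {set {set 'I_n}}) (c : {ffun 'I_n -> 'I_2}) :=
  [&& ~~ contains_11_12 P c, ~~ contains_11_22 P c & ~~ contains_12_21 P c].

Lemma charac n (P : {set {set 'I_n}}) c : partition P [set: 'I_n] ->
  avoids P c = (c == fk n #|S2 c|) && [|| #|S2 c| == 0, #|S2 c| == n | P == [set setT]].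
Proof.
move=> pP; have tP : trivIset P by case/and3P: pP.
have covP : cover P = setT by case/and3P: pP => /eqP.
have nP0 : set0 \notin P by case/and3P: pP.
apply/idP/idP.
- case/and3P=> N1 N2 N3.
  have H12 : forall i j : 'I_n, i < j -> c i == col1 -> c j == col2 -> False.
    move=> i j ij ci cj; case: (boolP (same_block P i j)) => sb.
      by move/negP: N1; apply; apply/existsP; exists i; apply/existsP; exists j; rewrite ij sb ci cj.
    by move/negP: N2; apply; apply/existsP; exists i; apply/existsP; exists j; rewrite ij sb ci cj.
  have H3 : forall i j : 'I_n, i < j -> c i == col2 -> c j == col1 -> same_block P i j.
    move=> i j ij ci cj; case: (boolP (same_block P i j)) => // sb; exfalso.
    by move/negP: N3; apply; apply/existsP; exists i; apply/existsP; exists j; rewrite ij sb ci cj.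
  have col1N : forall a : 'I_2, (a == col1) = ~~ (a == col2).
    by move=> a; case: a => [[|[|]]].
  have down : forall i j : 'I_n, j < i -> i \in S2 c -> j \in S2 c.
    move=> i j ji; rewrite !inE => ci; apply/negPn/negP => cj.
    by apply: (H12 j i ji) => //; rewrite col1N.
  set k := #|S2 c|.
  have memS : forall i : 'I_n, (i \in S2 c) = (i < k).
    move=> i; case: (boolP (i \in S2 c)) => iS.
      have sub : [set j : 'I_n | j < i.+1] \subset S2 c.
        apply/subsetP => j; rewrite inE ltnS leq_eqVlt => /orP [/eqP ji|ji].
          by have -> : j = i by apply/val_inj.
        exact: down ji iS.
      by have := subset_leq_card sub; rewrite card_lt.
    have sub : S2 c \subset [set j : 'I_n | j < i].
      apply/subsetP => j jS; rewrite inE ltnNge leq_eqVlt; apply/negP => /orP [/eqP ij|ij].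
        have ij' : i = j by apply/val_inj.
        by rewrite ij' jS in iS.
      by rewrite (down j i ij jS) in iS.
    have := subset_leq_card sub; rewrite card_lt; last exact: ltnW (ltn_ord i).
    by rewrite /k; move=> h; rewrite ltnNge h.
  have cE : c = fk n k.
    apply/ffunP => i; rewrite ffunE -memS inE.
    by case: (boolP (c i == col2)) => [/eqP //|]; rewrite -col1N => /eqP.
  rewrite -cE eqxx /=.
  case: (boolP (k == 0)) => // k0; case: (boolP (k == n)) => //= kn.
  have kn' : k <= n by rewrite /k; apply: leq_trans (max_card _) _; rewrite card_ord.
  have n0 : 0 < n by apply: leq_trans kn'; rewrite lt0n.
  have n1 : n.-1 < n by rewrite prednK.
  pose a : 'I_n := Ordinal n0; pose b : 'I_n := Ordinal n1.
  have aS : c a == col2.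
    by have := memS a; rewrite inE => ->; rewrite /= lt0n.
  have bS : c b == col1.
    have := memS b; rewrite inE col1N => ->; rewrite /= -ltnS prednK // ltnNge.
    by rewrite ltn_neqAle kn kn'.
  have ab : a < b.
    have kpos : 0 < k by rewrite lt0n.
    have kltn : k < n by rewrite ltn_neqAle kn kn'.
    rewrite /=; lia.
  have coverx : forall x : 'I_n, x \in cover P by move=> x; rewrite covP inE.
  have pbb : pblock P b = pblock P a.
    by apply: same_pblock => //; apply: same_block_pblock => //; apply: H3.
  have allin : forall i : 'I_n, i \in pblock P a.
    move=> i; case/orP: (col_cases (c i)) => ci.
      have ia : a < i.
        rewrite ltn_neqAle leq0n andbT; apply/negP => /eqP ai.
        have ai' : a = i by apply/val_inj.
        by rewrite -ai' (eqP aS) in ci.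
      by apply: same_block_pblock => //; apply: H3.
    have ib : i < b.
      rewrite ltn_neqAle -ltnS prednK // ltn_ord andbT; apply/negP => /eqP ib.
      have ib' : i = b by apply/val_inj.
      by rewrite ib' (eqP bS) in ci.
    have : b \in pblock P i by apply: same_block_pblock => //; apply: H3.
    move/same_pblock => /(_ tP); rewrite pbb => ->.
    by rewrite mem_pblock.
  have paT : pblock P a = setT by apply/setP => i; rewrite allin inE.
  have TP : setT \in P by rewrite -paT pblock_mem.
  apply/eqP/setP => B; rewrite inE; apply/idP/idP; last by move/eqP->.
  move=> BP; have : B != set0 by apply: (memPn nP0).
  case/set0Pn => x xB.
  by rewrite -(def_pblock tP BP xB) (def_pblock tP TP) ?inE.
- case/andP; move: (#|S2 c|) => k /eqP cE cond; subst c.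
  have sbT : P == [set setT] -> forall i j, same_block P i j.
    by move=> /eqP PE i j; rewrite /same_block; apply/existsP; exists setT; rewrite PE !inE eqxx.
  rewrite /avoids /contains_11_12 /contains_11_22 /contains_12_21.
  apply/and3P; split; apply/negP => /existsP [i /existsP [j /and4P [ij sb ci cj]]];
    move: ci cj; rewrite !ffunE; case/or3P: cond => [/eqP->|/eqP->|/sbT PT] //=;
    rewrite ?ltn_ord //;
    try by rewrite PT in sb.
  case: ifP => // ik _; case: ifP => // jk _.
  by move: ik; rewrite (ltn_trans ij jk).
Qed.

Definition condk n (k : nat) (P : {set {set 'I_n}}) :=
  [|| k == 0, k == n | P == [set setT]].

Definition Sk n (k : nat) : {set {set {set 'I_n}} * {ffun 'I_n -> 'I_2}} :=
  [set x | [&& is_set_partition x.1, x.2 == fk n k & condk k x.1]].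

Lemma S2_le n (c : {ffun 'I_n -> 'I_2}) : #|S2 c| <= n.
Proof. by apply: leq_trans (max_card _) _; rewrite card_ord. Qed.

Lemma inner n (k : 'I_n.+1) x :
  (x \in avoiders n) && (inord #|S2 x.2| == k) = (x \in Sk n k).
Proof.
case: x => P c; rewrite !inE /=.
case: (boolP (is_set_partition P)) => //= pP.
have := charac c pP; rewrite /avoids => ->.
have kn : k <= n by rewrite -ltnS ltn_ord.
case: (boolP (c == fk n k)) => [/eqP ->| ck].
  rewrite card_S2_fk // eqxx /=.
  by rewrite inord_val eqxx andbT.
rewrite /=; apply/negP => /andP [/andP [/eqP ce _] /eqP ik].
have e : #|S2 c| = k by rewrite -ik inordK // ltnS S2_le.
by move: ck; rewrite -e -ce eqxx.
Qed.

Lemma cardSk n (k : nat) : 0 < n -> k <= n ->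
  #|Sk n k| = if (k == 0) || (k == n) then Bell n else 1.
Proof.
move=> n0 kn; case: ifP => kc.
  have -> : Sk n k = [set (P, fk n k) | P in [set P : {set {set 'I_n}} | is_set_partition P]].
    apply/setP => [[P c]]; rewrite !inE /= /condk orbA kc /= andbT.
    apply/idP/imsetP.
      by case/andP => pP /eqP ->; exists P; rewrite ?inE.
    by case=> Q; rewrite inE => pQ [-> ->]; rewrite pQ eqxx.
  by rewrite card_imset // => a b [].
have -> : Sk n k = [set ([set setT], fk n k)].
  apply/setP => [[P c]]; rewrite !inE /= /condk orbA kc /= xpair_eqE.
  apply/idP/idP.
    by case/and3P => _ -> ->.
  case/andP => /eqP -> ->; rewrite eqxx andbT.
  rewrite /is_set_partition /partition cover1 eqxx trivIset1 /= inE eq_sym.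
  rewrite andbT; apply/set0Pn; by exists (Ordinal n0); rewrite inE.
by rewrite cards1.
Qed.

Theorem mainTheorem15 (n : nat) (hn : 1 <= n) :
  #|avoiders n| = 2 * Bell n + n - 1.
Proof.
rewrite -sum1_card (partition_big (fun x => inord #|S2 x.2| : 'I_n.+1) predT) //=.
rewrite (eq_bigr (fun k : 'I_n.+1 => if (k == 0 :> nat) || (k == n :> nat) then Bell n else 1)); last first.
  move=> k _; have kn : k <= n by rewrite -ltnS ltn_ord.
  rewrite -(cardSk hn kn) sum1_card; apply: eq_card => x; exact: inner.
case: n hn => // m _.
rewrite big_ord_recl big_ord_recr /=.
rewrite (eq_bigr (fun _ => 1)); last first.
  by move=> i _; rewrite /= /bump leq0n add1n eqSS ltn_eqF.
rewrite sum1_card card_ord.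
rewrite /bump leq0n add1n eqxx; lia.
Qed.
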